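(* Let $n\ge2$, $d\ge1$, $r\ge3$ with $n\ge d$ and $dr\equiv0\pmod n$. (1) If $dr=n$, then $\mathrm{diam}(Q_n(d,r))=n+r$ when $r=3$, and $\mathrm{diam}(Q_n(d,r))=n+\lfloor 3r/2\rfloor-2$ when $r\ge4$. (2) If $dr\ge 2n$, then $\mathrm{diam}(Q_n(d,r))=n+\max\{\lfloor r/2\rfloor,\,2\lceil n/d\rceil-2\}$.
   Context: $\mathbb{Z}_2^n=\{0,1\}^n$ with coordinatewise addition mod 2; $e_i$ is the $i$-th standard basis vector, subscripts read modulo $n$. The recursive cube of rings $Q_n(d,r)$ (for $n\ge d$, $dr\equiv0\pmod n$) is the simple graph on $\mathbb{Z}_2^n\times\mathbb{Z}_r$ in which $(a,x)$ is adjacent to $(a+e_{i+dx},x)$ for $1\le i\le d$ and to $(a,x\pm1)$. *)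

(* Defs.v *)
From mathcomp Require Import all_boot.
Set Implicit Arguments. Unset Strict Implicit. Unset Printing Implicit Defensive.

Definition step (T : finType) (e : rel T) (S : {set T}) : {set T} :=
  [set y | [exists x in S, e x y]].

Definition walkb (T : finType) (e : rel T) (k : nat) (u v : T) : bool :=
  v \in iter k (step e) [set u].

(* graph distance: least k such that a walk of length k from u to v exists
   (searching k < #|T|, which suffices for connected graphs; returns #|T|
   if v is unreachable from u) *)
Definition gdist (T : finType) (e : rel T) (u v : T) : nat :=
  find (fun k => walkb e k u v) (iota 0 #|T|).

Definition diam (T : finType) (e : rel T) : nat :=
  \max_(u : T) \max_(v : T) gdist e u v.

(* vertices: Z_2^n x Z_r, with coordinates of Z_2^n indexed by 'I_n
   (coordinate label k in 1..n is stored at index k-1, i.e. labels mod n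
   become indices mod n shifted by one) and Z_r represented by 'I_r *)
Definition QV (n r : nat) : finType := ({ffun 'I_n -> bool} * 'I_r)%type.

Definition flip (n : nat) (a : {ffun 'I_n -> bool}) (k : nat) : {ffun 'I_n -> bool} :=
  [ffun j : 'I_n => a j (+) (val j == k %% n)].

(* adjacency of Q_n(d,r):
   (a,x) ~ (a + e_{i+dx}, x) for 1 <= i <= d  (0-indexed: index i' + d x, i' < d)
   (a,x) ~ (a, x +- 1 mod r) *)
Definition Qadj (n d r : nat) : rel (QV n r) :=
  fun u v =>
    ((val u.2 == val v.2) && [exists i : 'I_d, v.1 == flip u.1 (i + d * u.2)])
    || ((u.1 == v.1) &&
        ((val v.2 == (u.2 + 1) %% r) || (val u.2 == (v.2 + 1) %% r))).

Definition ceil_div (m k : nat) : nat := (m + k - 1) %/ k.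
Arguments diam {T} e.
Arguments Qadj n d r : clear implicits.

(* Main.v *)
Require Import Defs.
From mathcomp Require Import all_boot.
From mathcomp Require Import zify.


Lemma arithF D k X lo hi c : lo <= X <= hi -> lo <= c <= hi ->
  D + minn (X - lo + (hi - lo) + (hi - c)) (hi - X + (hi - lo) + (c - lo)) <= k ->
  D + minn (X - lo + (maxn hi c.+1 - lo) + (maxn hi c.+1 - c.+1))
           (maxn hi c.+1 - X + (maxn hi c.+1 - lo) + (c.+1 - lo)) <= k.+1.
Proof.
move=> /andP [H1 H2] /andP [H3 H4].
set A := X - lo + _ + _; set B := hi - X + _ + _.
case: (leqP A B) => HAB H; rewrite /A /B in HAB H.
  case: (leqP hi c) => H5.
    have E : maxn hi c.+1 = c.+1 by apply/maxn_idPr; lia.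
    rewrite E; set A' := X - lo + _ + _; set B' := _ - X + _ + _.
    case: (leqP A' B') => H6; rewrite /A' /B' in H6 *; lia.
  have E : maxn hi c.+1 = hi by apply/maxn_idPl; lia.
  rewrite E; set A' := X - lo + _ + _; set B' := _ - X + _ + _.
  case: (leqP A' B') => H6; rewrite /A' /B' in H6 *; lia.
case: (leqP hi c) => H5.
  have E : maxn hi c.+1 = c.+1 by apply/maxn_idPr; lia.
  rewrite E; set A' := X - lo + _ + _; set B' := _ - X + _ + _.
  case: (leqP A' B') => H6; rewrite /A' /B' in H6 *; lia.
have E : maxn hi c.+1 = hi by apply/maxn_idPl; lia.
rewrite E; set A' := X - lo + _ + _; set B' := _ - X + _ + _.
case: (leqP A' B') => H6; rewrite /A' /B' in H6 *; lia.
Qed.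

Lemma arithB D k X lo hi c : lo <= X <= hi -> lo <= c <= hi -> 0 < c ->
  D + minn (X - lo + (hi - lo) + (hi - c)) (hi - X + (hi - lo) + (c - lo)) <= k ->
  D + minn (X - minn lo c.-1 + (hi - minn lo c.-1) + (hi - c.-1))
           (hi - X + (hi - minn lo c.-1) + (c.-1 - minn lo c.-1)) <= k.+1.
Proof.
move=> /andP [H1 H2] /andP [H3 H4] H0.
set A := X - lo + _ + _; set B := hi - X + _ + _.
case: (leqP A B) => HAB H; rewrite /A /B in HAB H.
  case: (leqP lo c.-1) => H5.
    set A' := X - lo + _ + _; set B' := _ - X + _ + _.
    case: (leqP A' B') => H6; rewrite /A' /B' in H6 *; lia.
  set A' := X - _ + _ + _; set B' := _ - X + _ + _.
  case: (leqP A' B') => H6; rewrite /A' /B' in H6 *; lia.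
case: (leqP lo c.-1) => H5.
  set A' := X - lo + _ + _; set B' := _ - X + _ + _.
  case: (leqP A' B') => H6; rewrite /A' /B' in H6 *; lia.
set A' := X - _ + _ + _; set B' := _ - X + _ + _.
case: (leqP A' B') => H6; rewrite /A' /B' in H6 *; lia.
Qed.


Lemma qsplit r K q : 0 < r ->
  [\/ r * K + r <= q * r, q * r = r * K, q * r + r = r * K | q * r + 2 * r <= r * K].
Proof.
move=> Hr; case: (ltngtP q K) => H.
- case: (ltngtP q.+1 K) => H2.
  + apply: Or44; have : q.+2 * r <= K * r by rewrite leq_mul2r H2 orbT.
    rewrite [r * K]mulnC; lia.
  + lia.
  + apply: Or43; rewrite -H2 mulnS; lia.
- apply: Or41; have : K.+1 * r <= q * r by rewrite leq_mul2r H orbT.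
  rewrite mulSn; lia.
- by apply: Or42; rewrite H mulnC.
Qed.

Definition AA X lo hi c := X - lo + (hi - lo) + (hi - c).
Definition BB X lo hi c := hi - X + (hi - lo) + (c - lo).

Lemma arith1 r h P Q lo hi c : 4 <= r -> 2 * h <= r <= 2 * h + 1 -> c = Q + h ->
  [\/ P + r <= Q, Q = P, Q + r = P | Q + 2 * r <= P] ->
  r <= (hi - lo).+1 -> lo <= P <= hi -> lo <= c <= hi ->
  r + h - 2 <= minn (AA P lo hi c) (BB P lo hi c).
Proof.
rewrite /AA /BB leq_min => H1 H2 H3 H4 H5 H6 H7.
case: H4 => H4; apply/andP; split; lia.
Qed.

Lemma arith1' r P Q lo hi c : r = 3 -> c = Q ->
  [\/ P + r <= Q, Q = P, Q + r = P | Q + 2 * r <= P] ->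
  r <= (hi - lo).+1 -> lo <= P <= hi -> lo <= c <= hi ->
  r <= minn (AA P lo hi c) (BB P lo hi c).
Proof.
rewrite /AA /BB leq_min => H1 H3 H4 H5 H6 H7.
case: H4 => H4; apply/andP; split; lia.
Qed.

Lemma arith2a r h P Q lo hi c : 2 * h <= r <= 2 * h + 1 -> c = Q + h ->
  [\/ P + r <= Q, Q = P, Q + r = P | Q + 2 * r <= P] ->
  lo <= P <= hi -> lo <= c <= hi ->
  h <= minn (AA P lo hi c) (BB P lo hi c).
Proof.
rewrite /AA /BB leq_min => H2 H3 H4 H6 H7.
case: H4 => H4; apply/andP; split; lia.
Qed.

Lemma arith2b r m P Q lo hi c : 2 * m <= r + 1 -> c = Q ->
  [\/ P + r <= Q, Q = P, Q + r = P | Q + 2 * r <= P] ->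
  m <= (hi - lo).+1 -> lo <= P <= hi -> lo <= c <= hi ->
  2 * m - 2 <= minn (AA P lo hi c) (BB P lo hi c).
Proof.
rewrite /AA /BB leq_min => H2 H3 H4 H5 H6 H7.
case: H4 => H4; apply/andP; split; lia.
Qed.

Set Implicit Arguments. Unset Strict Implicit. Unset Printing Implicit Defensive.

Lemma walk0 (T : finType) (e : rel T) u : walkb e 0 u u.
Proof. by rewrite /walkb /= set11. Qed.

Lemma walkS (T : finType) (e : rel T) k u w v :
  walkb e k u w -> e w v -> walkb e k.+1 u v.
Proof.
by move=> H1 H2; rewrite /walkb /= /step inE; apply/existsP; exists w; apply/andP.
Qed.

Lemma walkSinv (T : finType) (e : rel T) k u v :
  walkb e k.+1 u v -> exists w, walkb e k u w /\ e w v.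
Proof.
rewrite /walkb /= /step inE => /existsP [w /andP [H1 H2]]; by exists w.
Qed.

Lemma walk_cat (T : finType) (e : rel T) k l u w v :
  walkb e k u w -> walkb e l w v -> walkb e (k + l) u v.
Proof.
move=> Hk; elim: l v => [|l IH] v.
  by rewrite /walkb /= inE => /eqP ->; rewrite addn0.
move=> /walkSinv [w' [H1 H2]]; rewrite addnS; exact: walkS (IH _ H1) H2.
Qed.

Definition reach (T : finType) (e : rel T) m u v := exists2 k, k <= m & walkb e k u v.

Lemma reach_cat (T : finType) (e : rel T) m l u w v :
  reach e m u w -> reach e l w v -> reach e (m + l) u v.
Proof.
move=> [k Hk H1] [k' Hk' H2]; exists (k + k'); first by apply: leq_add.
exact: walk_cat H1 H2.
Qed.

Lemma reach_le (T : finType) (e : rel T) m m' u v : m <= m' -> reach e m u v -> reach e m' u v.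
Proof. move=> H [k Hk W]; exists k => //; exact: leq_trans Hk H. Qed.

Lemma gdist_le (T : finType) (e : rel T) k u v :
  walkb e k u v -> k < #|T| -> gdist e u v <= k.
Proof.
move=> W Hk; rewrite /gdist; case: leqP => // H.
have := before_find 0 H; rewrite nth_iota // add0n W //.
Qed.

Lemma gdist_ge (T : finType) (e : rel T) D u v :
  (forall k, k < D -> ~~ walkb e k u v) -> D <= #|T| -> D <= gdist e u v.
Proof.
move=> H HD; rewrite /gdist; case: leqP => // Hf.
have Hs : find (fun k => walkb e k u v) (iota 0 #|T|) < size (iota 0 #|T|).
  by rewrite size_iota; exact: leq_trans Hf HD.
have := nth_find 0 (eqbRL (has_find _ _) Hs).
rewrite nth_iota ?add0n; last by rewrite size_iota in Hs.
by move/negP: (H _ Hf).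
Qed.

Lemma reach_gdist (T : finType) (e : rel T) m u v :
  reach e m u v -> m < #|T| -> gdist e u v <= m.
Proof.
move=> [k Hk W] Hm; exact: leq_trans (gdist_le W (leq_ltn_trans Hk Hm)) Hk.
Qed.


Definition L r (Hr : 0 < r) (w : nat) : 'I_r := Ordinal (ltn_pmod w Hr).
Definition W n d r (x : 'I_r) : {set 'I_n} :=
  [set j | [exists i : 'I_d, val j == (i + d * x) %% n]].
Definition cov n d r (Hr : 0 < r) z s : {set 'I_n} :=
  [set j | [exists t : 'I_s.+1, j \in W n d (L Hr (z + t))]].
Definition xs n (a : {ffun 'I_n -> bool}) (S : {set 'I_n}) : {ffun 'I_n -> bool} :=
  [ffun j => a j (+) (j \in S)].
Definition diff n (a b : {ffun 'I_n -> bool}) : {set 'I_n} := [set j | a j != b j].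

Lemma fixW n d r (x : 'I_r) (a : {ffun 'I_n -> bool}) (S : {set 'I_n}) :
  S \subset W n d x -> walkb (Qadj n d r) #|S| (a, x) (xs a S, x).
Proof.
move Hk: #|S| => k; elim: k S Hk => [|k IH] S Hk HS.
  have -> : xs a S = a.
    by apply/ffunP => j; rewrite ffunE (cards0_eq Hk) inE addbF.
  exact: walk0.
have [j Hj] : exists j, j \in S by apply/card_gt0P; rewrite Hk.
have HS' : #|S :\ j| = k by move: (cardsD1 j S); rewrite Hj Hk add1n => -[].
have HsS' : S :\ j \subset W n d x by apply: subset_trans HS; apply: subsetDl.
apply: walkS (IH _ HS' HsS') _.
have := subsetP HS j Hj; rewrite inE => /existsP [i Hi].
rewrite /Qadj /=; apply/orP; left; rewrite eqxx /=; apply/existsP; exists i.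
apply/eqP/ffunP => j'; rewrite !ffunE -(eqP Hi) in_setD1.
have -> : (val j' == val j) = (j' == j) by [].
by case: (j' =P j) => [->|_]; rewrite ?Hj /= ?addbF ?addbT.
Qed.


Lemma diff_xs n (a b : {ffun 'I_n -> bool}) V :
  diff (xs a (diff a b :&: V)) b = diff a b :\: V.
Proof.
apply/setP => j; rewrite !inE ffunE !inE.
by case: (a j); case: (b j); case: (j \in V).
Qed.

Lemma diff0 n (a b : {ffun 'I_n -> bool}) : diff a b = set0 -> a = b.
Proof.
move=> H; apply/ffunP => j; apply/eqP; apply/negPn.
by have := in_set0 j; rewrite -H inE => ->.
Qed.

Lemma fix_step n d r (x : 'I_r) (a b : {ffun 'I_n -> bool}) :
  reach (Qadj n d r) #|diff a b :&: W n d x| (a, x) (xs a (diff a b :&: W n d x), x).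
Proof. exists #|diff a b :&: W n d x| => //; apply: fixW; exact: subsetIr. Qed.

Lemma edgeF n d r (Hr : 0 < r) z a : Qadj n d r (a, L Hr z) (a, L Hr z.+1).
Proof. apply/orP; right; apply/andP; split => //=; apply/orP; left; apply/eqP; by rewrite modnDml addn1. Qed.

Lemma edgeB n d r (Hr : 0 < r) z a : Qadj n d r (a, L Hr z.+1) (a, L Hr z).
Proof. apply/orP; right; apply/andP; split => //=; apply/orP; right; apply/eqP; by rewrite modnDml addn1. Qed.

Lemma reach_edge (T : finType) (e : rel T) u v : e u v -> reach e 1 u v.
Proof. by move=> H; exists 1 => //; apply: walkS (walk0 _ _) H. Qed.

Lemma cov0 n d r (Hr : 0 < r) z (D : {set 'I_n}) :
  D \subset cov n d Hr z 0 -> D :\: W n d (L Hr z) = set0.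
Proof.
move=> H; apply/setP => j; rewrite in_setD in_set0; apply/negP => /andP [Hj HD].
have := subsetP H j HD; rewrite /cov in_set => /existsP [t].
by rewrite (ord1 t) /= addn0 (negbTE Hj).
Qed.

Lemma covSF n d r (Hr : 0 < r) z s (D : {set 'I_n}) :
  D \subset cov n d Hr z s.+1 -> D :\: W n d (L Hr z) \subset cov n d Hr z.+1 s.
Proof.
move=> H; apply/subsetP => j; rewrite in_setD => /andP [Hj HD].
have := subsetP H j HD; rewrite /cov in_set => /existsP [[t Ht] /= Hjt].
case: t Ht Hjt => [|t] Ht Hjt; first by rewrite addn0 in Hjt; rewrite Hjt in Hj.
rewrite /cov in_set; apply/existsP; exists (Ordinal (Ht : t < s.+1)) => /=.
by rewrite addSnnS.
Qed.

Lemma covSB n d r (Hr : 0 < r) z s (D : {set 'I_n}) :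
  D \subset cov n d Hr z s.+1 -> D :\: W n d (L Hr (z + s.+1)) \subset cov n d Hr z s.
Proof.
move=> H; apply/subsetP => j; rewrite in_setD => /andP [Hj HD].
have := subsetP H j HD; rewrite /cov in_set => /existsP [[t Ht] /= Hjt].
have Hts : t != s.+1 by apply: contraNneq Hj => <-.
have Ht' : t < s.+1 by rewrite ltnS in Ht; rewrite ltn_neqAle Hts.
by rewrite /cov in_set; apply/existsP; exists (Ordinal Ht').
Qed.

Lemma sweepF n d r (Hr : 0 < r) s : forall z (a b : {ffun 'I_n -> bool}),
  diff a b \subset cov n d Hr z s ->
  reach (Qadj n d r) (s + #|diff a b|) (a, L Hr z) (b, L Hr (z + s)).
Proof.
elim: s => [|s IH] z a b H.
  have H0 := cov0 H; rewrite -diff_xs in H0; have E := diff0 H0.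
  rewrite add0n addn0 -(cardsID (W n d (L Hr z)) (diff a b)) -diff_xs H0 cards0 addn0.
  rewrite -{2}E; exact: fix_step.
have H1 := covSF H; rewrite -diff_xs in H1.
rewrite -(cardsID (W n d (L Hr z)) (diff a b)) -diff_xs.
set a' := xs a _.
have -> : s.+1 + (#|diff a b :&: W n d (L Hr z)| + #|diff a' b|) =
  #|diff a b :&: W n d (L Hr z)| + 1 + (s + #|diff a' b|) by lia.
apply: (reach_cat (w := (a', L Hr z.+1))).
  apply: (reach_cat (w := (a', L Hr z))); first exact: fix_step.
  apply: reach_edge; exact: edgeF.
rewrite -addSnnS; exact: IH.
Qed.

Lemma sweepB n d r (Hr : 0 < r) z s : forall (a b : {ffun 'I_n -> bool}),
  diff a b \subset cov n d Hr z s ->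
  reach (Qadj n d r) (s + #|diff a b|) (a, L Hr (z + s)) (b, L Hr z).
Proof.
elim: s => [|s IH] a b H.
  have H0 := cov0 H; rewrite -diff_xs in H0; have E := diff0 H0.
  rewrite add0n addn0 -(cardsID (W n d (L Hr z)) (diff a b)) -diff_xs H0 cards0 addn0.
  rewrite -{2}E; exact: fix_step.
have H1 := covSB H; rewrite -diff_xs in H1.
rewrite -(cardsID (W n d (L Hr (z + s.+1))) (diff a b)) -diff_xs.
set a' := xs a _.
have -> : s.+1 + (#|diff a b :&: W n d (L Hr (z + s.+1))| + #|diff a' b|) =
  #|diff a b :&: W n d (L Hr (z + s.+1))| + 1 + (s + #|diff a' b|) by lia.
apply: (reach_cat (w := (a', L Hr (z + s)))); last exact: IH.
apply: (reach_cat (w := (a', L Hr (z + s.+1)))); first exact: fix_step.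
rewrite addnS; apply: reach_edge; exact: edgeB.
Qed.


Lemma mod_layer n d r i w : (d * r) %% n = 0 ->
  (i + d * (w %% r)) %% n = (i + d * w) %% n.
Proof.
move=> H.
have Hdr : d * r = (d * r %/ n) * n.
  by rewrite {1}(divn_eq (d * r) n) H addn0.
have -> : i + d * w = (w %/ r * (d * r %/ n)) * n + (i + d * (w %% r)).
  rewrite {1}(divn_eq w r) mulnDr -mulnA -Hdr.
  rewrite [d * (w %/ r * r)]mulnC -mulnA [r * d]mulnC; lia.
by rewrite modnMDl.
Qed.

Lemma covT n d r (Hr : 0 < r) z s : 0 < d -> 0 < n -> (d * r) %% n = 0 ->
  n <= s.+1 * d -> forall j, j \in cov n d Hr z s.
Proof.
move=> Hd Hn Hdr Hns j.
set e := (j + (n - (d * z) %% n)) %% n.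
have He : e < n by rewrite ltn_pmod.
have Ht : e %/ d < s.+1 by rewrite ltn_divLR //; exact: leq_trans He Hns.
rewrite /cov in_set; apply/existsP; exists (Ordinal Ht).
rewrite /W in_set; apply/existsP; exists (Ordinal (ltn_pmod e Hd)) => /=.
rewrite mod_layer //.
have -> : e %% d + d * (z + e %/ d) = d * z + e.
  rewrite {3}(divn_eq e d) mulnDr [d * _]mulnC; lia.
rewrite -modnDml /e modnDmr.
have Hm : (d * z) %% n < n by rewrite ltn_pmod.
have -> : (d * z) %% n + (j + (n - (d * z) %% n)) = j + n by lia.
by rewrite modnDr modn_small.
Qed.

Lemma cov_card n d r (Hr : 0 < r) z s : 0 < n -> #|cov n d Hr z s| <= s.+1 * d.
Proof.
move=> Hn.
pose f (p : 'I_s.+1 * 'I_d) : 'I_n :=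
  Ordinal (ltn_pmod (p.2 + d * (L Hr (z + p.1))) Hn).
have Hsub : cov n d Hr z s \subset f @: setT.
  apply/subsetP => j; rewrite /cov in_set => /existsP [t].
  rewrite /W in_set => /existsP [i /eqP Hi].
  by apply/imsetP; exists (t, i) => //; apply: val_inj; rewrite /= Hi.
apply: leq_trans (subset_leq_card Hsub) _.
apply: leq_trans (leq_imset_card _ _) _.
by rewrite cardsT card_prod !card_ord.
Qed.

Lemma cov_mono n d r (Hr : 0 < r) lo hi lo' hi' :
  lo' <= lo -> lo <= hi -> hi <= hi' ->
  cov n d Hr lo (hi - lo) \subset cov n d Hr lo' (hi' - lo').
Proof.
move=> H1 H2 H3; apply/subsetP => j; rewrite /cov !in_set => /existsP [[t Ht] /= Hj].
have Ht' : t + (lo - lo') < (hi' - lo').+1 by lia.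
apply/existsP; exists (Ordinal Ht') => /=.
have -> : lo' + (t + (lo - lo')) = lo + t by lia.
done.
Qed.


Lemma diff_flip n (Hn : 0 < n) (a b : {ffun 'I_n -> bool}) k0 :
  diff a (flip b k0) \subset Ordinal (ltn_pmod k0 Hn) |: diff a b.
Proof.
apply/subsetP => j; rewrite /diff !inE ffunE.
have -> : (j == Ordinal (ltn_pmod k0 Hn)) = (val j == k0 %% n) by [].
by case: (val j == k0 %% n); rewrite ?addbF ?orbT.
Qed.

Lemma inv n d r (Hr : 0 < r) (Hn : 0 < n) K (a : {ffun 'I_n -> bool}) (x : 'I_r) k :
  k <= K -> forall v, walkb (Qadj n d r) k (a, x) v ->
  exists lo hi c, [/\ (lo <= r * K + x <= hi) && (lo <= c <= hi),
     r * K + x <= lo + k, c %% r = v.2,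
     diff a v.1 \subset cov n d Hr lo (hi - lo) &
     #|diff a v.1| + minn ((r * K + x - lo) + (hi - lo) + (hi - c))
                          ((hi - (r * K + x)) + (hi - lo) + (c - lo)) <= k].
Proof.
have HK : K <= r * K by apply: leq_pmull.
elim: k => [|k IH] Hk v.
  rewrite /walkb /= inE => /eqP ->; exists (r * K + x), (r * K + x), (r * K + x).
  split => //=.
  - lia.
  - by rewrite addn0.
  - by rewrite mulnC modnMDl modn_small.
  - have -> : diff a a = set0 by apply/setP => j; rewrite !inE eqxx.
    exact: sub0set.
  - have -> : diff a a = set0 by apply/setP => j; rewrite !inE eqxx.
    by rewrite cards0; lia.
move=> /walkSinv [[b' y'] [Hw He]].
have [lo [hi [c [/andP [H1 H2] H3 H4 H5 H6]]]] := IH (ltnW Hk) _ Hw.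
move: H4 H5 H6 => /= H4 H5 H6.
case: v He => b y /orP [/andP [/eqP Hy /existsP [i /eqP Hb]] | /andP [/eqP Hb Hring]] /=.
-
  move: Hb Hy => /= Hb Hy.
  exists lo, hi, c; split => //.
  + by rewrite H1 H2.
  + lia.
  + by rewrite H4 Hy.
  + rewrite Hb; apply: subset_trans (diff_flip Hn _ _ _) _.
    rewrite subUset H5 andbT sub1set /cov in_set; apply/existsP.
    have Ht : c - lo < (hi - lo).+1 by lia.
    exists (Ordinal Ht); rewrite /W in_set; apply/existsP; exists i => /=.
    have -> : lo + (c - lo) = c by lia.
    by rewrite H4.
  + rewrite Hb; apply: leq_trans (leq_add (subset_leq_card (diff_flip Hn _ _ _)) (leqnn _)) _.
    rewrite cardsU1; move: H6; set M := minn _ _; case: (_ \notin _) => /=; lia.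
- move: Hb Hring => /= Hb Hring; subst b'.
  case/orP: Hring => /eqP Hring.
  + exists lo, (maxn hi c.+1), c.+1; split.
    * move: H1 H2; rewrite /maxn; case: ltnP => /= H7 H1 H2; lia.
    * lia.
    * by rewrite Hring -addn1 -modnDml H4.
    * apply: subset_trans H5 _; apply: cov_mono => //; lia.
    * exact: arithF.
  + have Hc : 0 < c by lia.
    exists (minn lo c.-1), hi, c.-1; split.
    * move: H1 H2 => /andP [H1 H1'] /andP [H2 H2'].
      case: (leqP lo c.-1) => H7; apply/andP; split; apply/andP; split; lia.
    * move: H1 H2 => /andP [H1 H1'] /andP [H2 H2'].
      case: (leqP lo c.-1) => H7; lia.
    * have : c.-1 + 1 == y + 1 %[mod r] by rewrite addn1 prednK // H4 Hring.
      by rewrite eqn_modDr (modn_small (ltn_ord y)) => /eqP.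
    * apply: subset_trans H5 _; apply: cov_mono => //; first exact: geq_minl; lia.
    * exact: arithB.
Qed.


Lemma Lval r (Hr : 0 < r) (x : 'I_r) : L Hr x = x.
Proof. by apply: val_inj; rewrite /= modn_small. Qed.

Lemma LaddR r (Hr : 0 < r) w : L Hr (w + r) = L Hr w.
Proof. by apply: val_inj; rewrite /= modnDr. Qed.

Lemma diff_card n (a b : {ffun 'I_n -> bool}) : #|diff a b| <= n.
Proof. by apply: leq_trans (max_card _) _; rewrite card_ord. Qed.

Lemma sweepF' n d r (Hr : 0 < r) s z (a b : {ffun 'I_n -> bool}) :
  0 < d -> 0 < n -> (d * r) %% n = 0 -> n <= s.+1 * d ->
  reach (Qadj n d r) (s + n) (a, L Hr z) (b, L Hr (z + s)).
Proof.
move=> Hd Hn Hdr Hs; apply: (@reach_le _ _ (s + #|diff a b|)); first by rewrite leq_add2l diff_card.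
apply: sweepF.
by apply/subsetP => j _; apply: covT.
Qed.

Lemma sweepB' n d r (Hr : 0 < r) s z (a b : {ffun 'I_n -> bool}) :
  0 < d -> 0 < n -> (d * r) %% n = 0 -> n <= s.+1 * d ->
  reach (Qadj n d r) (s + n) (a, L Hr (z + s)) (b, L Hr z).
Proof.
move=> Hd Hn Hdr Hs; apply: (@reach_le _ _ (s + #|diff a b|)); first by rewrite leq_add2l diff_card.
apply: sweepB.
by apply/subsetP => j _; apply: covT.
Qed.

Lemma diff_aa n (a : {ffun 'I_n -> bool}) : diff a a = set0.
Proof. by apply/setP => j; rewrite !inE eqxx. Qed.

Lemma moveF n d r (Hr : 0 < r) t z (a : {ffun 'I_n -> bool}) :
  reach (Qadj n d r) t (a, L Hr z) (a, L Hr (z + t)).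
Proof.
have := @sweepF n d r Hr t z a a; rewrite diff_aa cards0 addn0; apply; exact: sub0set.
Qed.

Lemma moveB n d r (Hr : 0 < r) t z (a : {ffun 'I_n -> bool}) :
  reach (Qadj n d r) t (a, L Hr (z + t)) (a, L Hr z).
Proof.
have := @sweepB n d r Hr z t a a; rewrite diff_aa cards0 addn0; apply; exact: sub0set.
Qed.

Lemma card_QV n r : #|QV n r| = 2 ^ n * r.
Proof. by rewrite /QV card_prod card_ffun !card_ord card_bool. Qed.

Lemma diam_ub n d r D : D < #|QV n r| ->
  (forall u v, reach (Qadj n d r) D u v) -> diam (Qadj n d r) <= D.
Proof.
move=> HD H; apply/bigmax_leqP => u _; apply/bigmax_leqP => v _.
exact: reach_gdist (H u v) HD.
Qed.

Lemma diam_lb n d r D u v : D <= #|QV n r| ->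
  (forall k, k < D -> ~~ walkb (Qadj n d r) k u v) -> D <= diam (Qadj n d r).
Proof.
move=> HD H; apply: leq_trans (gdist_ge H HD) _.
apply: leq_trans (leq_bigmax v) _; exact: (leq_bigmax (F := fun u => \max_v gdist _ u v) u).
Qed.


Lemma fg_exists r (Hr : 0 < r) (x y : 'I_r) : x != y ->
  exists f g, [/\ L Hr (x + f) = y, L Hr (y + g) = x, f + g = r, 0 < f & 0 < g].
Proof.
move=> Hxy; have Hv : (x : nat) != (y : nat) by [].
have Hx := ltn_ord x; have Hy := ltn_ord y.
case: (ltngtP ((x : nat)) ((y : nat))) => H; last by rewrite H eqxx in Hv.
- exists (y - x), (x + r - y); split; try lia.
  + have -> : x + (y - x) = (y : nat) by lia.
    by rewrite Lval.
  + have -> : y + (x + r - y) = x + r by lia.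
    by rewrite LaddR Lval.
- exists (y + r - x), (x - y); split; try lia.
  + have -> : x + (y + r - x) = y + r by lia.
    by rewrite LaddR Lval.
  + have -> : y + (x - y) = (x : nat) by lia.
    by rewrite Lval.
Qed.

Lemma ub_case1 n d r (Hr : 0 < r) a b (x y : 'I_r) : 0 < d -> 0 < n -> d * r = n -> 3 <= r ->
  reach (Qadj n d r) (n + (if r == 3 then r else r + r %/ 2 - 2)) (a, x) (b, y).
Proof.
move=> Hd Hn Hdr Hr3.
have Hdr0 : (d * r) %% n = 0 by rewrite Hdr modnn.
have Hcov : forall s, r <= s.+1 -> n <= s.+1 * d.
  by move=> s Hs; rewrite -Hdr mulnC leq_mul2r Hs orbT.
have Hh : 2 * (r %/ 2) <= r <= 2 * (r %/ 2) + 1 by lia.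
case: (eqVneq x y) => [<-|Hxy].
  have := @sweepF' n d r Hr r x a b Hd Hn Hdr0 (Hcov _ (leqnSn _)).
  rewrite LaddR Lval; apply: reach_le; case: ifP => /eqP; lia.
have [f [g [Ef Eg Hfg Hf Hg]]] := fg_exists Hr Hxy.
case: (leqP f g) => Hfg'.
- have R1 := @moveF n d r Hr f.-1 x a.
  have R2 := @sweepB' n d r Hr (r.-1) (x + f) a b Hd Hn Hdr0 (Hcov _ (leqSpred _)).
  rewrite Ef in R2.
  have E : x + f + r.-1 = x + f.-1 + r by lia.
  rewrite E LaddR in R2; rewrite Lval in R1.
  apply: reach_le (reach_cat R1 R2); case: ifP => /eqP; lia.
- have R1 := @moveB n d r Hr g.-1 y.+1 a.
  have R2 := @sweepF' n d r Hr (r.-1) y.+1 a b Hd Hn Hdr0 (Hcov _ (leqSpred _)).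
  have E1 : y.+1 + g.-1 = y + g by lia.
  have E2 : y.+1 + r.-1 = y + r by lia.
  rewrite E1 Eg in R1; rewrite E2 LaddR Lval in R2.
  apply: reach_le (reach_cat R1 R2); case: ifP => /eqP; lia.
Qed.

Lemma ceil_facts n d : 0 < d -> 0 < n ->
  n <= ceil_div n d * d /\ ceil_div n d * d <= n + d - 1.
Proof.
move=> Hd Hn; rewrite /ceil_div; set m := (n + d - 1) %/ d.
have E := divn_eq (n + d - 1) d; have Hl := ltn_pmod (n + d - 1) Hd.
rewrite -/m in E; split; lia.
Qed.

Lemma ub_case2 n d r (Hr : 0 < r) a b (x y : 'I_r) : 0 < d -> 0 < n -> (d * r) %% n = 0 ->
  2 * n <= d * r ->
  reach (Qadj n d r) (n + maxn (r %/ 2) (2 * ceil_div n d - 2)) (a, x) (b, y).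
Proof.
move=> Hd Hn Hdr0 H2n.
have [Hm1 Hm2] := ceil_facts Hd Hn.
set m := ceil_div n d in Hm1 Hm2 *.
have Hm0 : 0 < m by move: Hm1; case: (m) => //; rewrite mul0n; lia.
have Hcov : forall s, m <= s.+1 -> n <= s.+1 * d.
  by move=> s Hs; apply: leq_trans Hm1 _; rewrite leq_mul2r Hs orbT.
have Hmr : 2 * m <= r + 1.
  have : (2 * m) * d < r.+2 * d.
    rewrite -mulnA; apply: (@leq_ltn_trans (2 * n + 2 * d - 2)); first lia.
    rewrite mulSn mulSn; lia.
  rewrite ltn_mul2r; lia.
have Hh : 2 * (r %/ 2) <= r <= 2 * (r %/ 2) + 1 by lia.
have Hsm : m.-1.+1 = m by lia.
case: (eqVneq x y) => [<-|Hxy].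
  have R1 := @moveB n d r Hr m.-1 (x + r - m.-1) a.
  have R2 := @sweepF' n d r Hr m.-1 (x + r - m.-1) a b Hd Hn Hdr0 (Hcov _ (eq_leq (esym Hsm))).
  have E : x + r - m.-1 + m.-1 = x + r by lia.
  rewrite E LaddR Lval in R1 R2.
  apply: reach_le (reach_cat R1 R2); lia.
have [f [g [Ef Eg Hfg Hf Hg]]] := fg_exists Hr Hxy.
case: (leqP f (maxn (r %/ 2) (2 * m - 2))) => HfD.
  case: (leqP m.-1 f) => Hfm.
    have R := @sweepF' n d r Hr f x a b Hd Hn Hdr0 (Hcov _ _).
    rewrite Ef Lval in R; apply: reach_le (R _); lia.
  have R1 := @moveB n d r Hr (m.-1 - f) (x + r - (m.-1 - f)) a.
  have R2 := @sweepF' n d r Hr m.-1 (x + r - (m.-1 - f)) a b Hd Hn Hdr0 (Hcov _ (eq_leq (esym Hsm))).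
  have E1 : x + r - (m.-1 - f) + (m.-1 - f) = x + r by lia.
  have E2 : x + r - (m.-1 - f) + m.-1 = x + f + r by lia.
  rewrite E1 LaddR Lval in R1; rewrite E2 LaddR Ef in R2.
  apply: reach_le (reach_cat R1 R2); lia.
case: (leqP m.-1 g) => Hgm.
  have R := @sweepB' n d r Hr g y a b Hd Hn Hdr0 (Hcov _ _).
  rewrite Eg Lval in R; apply: reach_le (R _); lia.
have R1 := @moveF n d r Hr (m.-1 - g) x a.
have R2 := @sweepB' n d r Hr m.-1 (x + f) a b Hd Hn Hdr0 (Hcov _ (eq_leq (esym Hsm))).
have E : x + f + m.-1 = x + (m.-1 - g) + r by lia.
rewrite E LaddR Ef in R2; rewrite Lval in R1.
apply: reach_le (reach_cat R1 R2); lia.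
Qed.


Lemma lb_core n d r (Hr : 0 < r) (Hn : 0 < n) (x y : 'I_r) k :
  walkb (Qadj n d r) k ([ffun=> false], x) ([ffun=> true], y) ->
  exists lo hi c, [/\ (lo <= r * k + x <= hi) && (lo <= c <= hi), c %% r = y,
     n <= (hi - lo).+1 * d & n + minn (AA (r * k + x) lo hi c) (BB (r * k + x) lo hi c) <= k].
Proof.
move=> W.
have [lo [hi [c [H1 _ H4 H5 H6]]]] := @inv n d r Hr Hn k _ x k (leqnn k) _ W.
have Ed : diff [ffun=> false] [ffun=> true] = [set: 'I_n] by apply/setP => j; rewrite !inE !ffunE.
move: H5 H6; rewrite /= Ed cardsT card_ord => H5 H6.
exists lo, hi, c; split => //.
apply: leq_trans (cov_card d Hr lo (hi - lo) Hn).
have := subset_leq_card H5; by rewrite cardsT card_ord.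
Qed.

Lemma bound n r : 2 <= n -> 2 <= r -> n + 2 * r < 2 ^ n * r.
Proof.
move=> Hn Hr.
have H1 : n < 2 ^ n by apply: ltn_expl.
have H2 : 4 <= 2 ^ n by rewrite (_ : 4 = 2 ^ 2) // leq_exp2l.
have H3 : 4 * r.-1 <= 2 ^ n * r.-1 by rewrite leq_mul2r H2 orbT.
have E : 2 ^ n * r = 2 ^ n * r.-1 + 2 ^ n by rewrite -mulnSr prednK //; lia.
lia.
Qed.

Lemma lb_gen n d r (Hr : 0 < r) (Hn : 0 < n) (x y : 'I_r) T k :
  (x : nat) = 0 ->
  (forall lo hi c Q, lo <= r * k <= hi -> lo <= c <= hi -> c = Q + y ->
     [\/ r * k + r <= Q, Q = r * k, Q + r = r * k | Q + 2 * r <= r * k] ->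
     n <= (hi - lo).+1 * d -> T <= minn (AA (r * k) lo hi c) (BB (r * k) lo hi c)) ->
  k < n + T -> ~~ walkb (Qadj n d r) k ([ffun=> false], x) ([ffun=> true], y).
Proof.
move=> Hx H Hk; apply/negP => W.
have [lo [hi [c [/andP [H1 H2] H4 H5 H6]]]] := lb_core Hr Hn W.
rewrite Hx addn0 in H1 H6.
have E := divn_eq c r; rewrite H4 in E.
have Hq := qsplit r k (c %/ r) Hr.
move: H6; set M := minn _ _ => H6.
have := H lo hi c _ H1 H2 E Hq H5; rewrite -/M; lia.
Qed.

Lemma lb1 n d r (Hr : 0 < r) (Hn : 0 < n) (Hd : 0 < d) (Hh : r %/ 2 < r) k :
  d * r = n -> 4 <= r -> k < n + (r + r %/ 2 - 2) ->
  ~~ walkb (Qadj n d r) k ([ffun=> false], Ordinal Hr) ([ffun=> true], Ordinal Hh).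
Proof.
move=> Hdr Hr4; apply: lb_gen => // lo hi c Q H1 H2 H3 H4 H5.
apply: (@arith1 r (r %/ 2) (r * k) Q lo hi c) => //; first lia.
by move: H5; rewrite -Hdr mulnC leq_mul2r => /orP [/eqP Hd0|//]; lia.
Qed.

Lemma lb1' n d r (Hr : 0 < r) (Hn : 0 < n) (Hd : 0 < d) k :
  d * r = n -> r = 3 -> k < n + r ->
  ~~ walkb (Qadj n d r) k ([ffun=> false], Ordinal Hr) ([ffun=> true], Ordinal Hr).
Proof.
move=> Hdr Hr3; apply: lb_gen => // lo hi c Q H1 H2 H3 H4 H5.
apply: (@arith1' r (r * k) Q lo hi c) => //; first by rewrite addn0 in H3.
by move: H5; rewrite -Hdr mulnC leq_mul2r => /orP [/eqP Hd0|//]; lia.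
Qed.

Lemma lb2a n d r (Hr : 0 < r) (Hn : 0 < n) (Hh : r %/ 2 < r) k :
  k < n + r %/ 2 ->
  ~~ walkb (Qadj n d r) k ([ffun=> false], Ordinal Hr) ([ffun=> true], Ordinal Hh).
Proof.
apply: lb_gen => // lo hi c Q H1 H2 H3 H4 H5.
apply: (@arith2a r (r %/ 2) (r * k) Q lo hi c) => //; lia.
Qed.

Lemma lb2b n d r (Hr : 0 < r) (Hn : 0 < n) (Hd : 0 < d) k :
  2 * n <= d * r -> k < n + (2 * ceil_div n d - 2) ->
  ~~ walkb (Qadj n d r) k ([ffun=> false], Ordinal Hr) ([ffun=> true], Ordinal Hr).
Proof.
move=> H2n; apply: lb_gen => // lo hi c Q H1 H2 H3 H4 H5.
have [Hm1 Hm2] := ceil_facts Hd Hn.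
set m := ceil_div n d in Hm1 Hm2 *.
have Hmr : 2 * m <= r + 1.
  have : (2 * m) * d < r.+2 * d.
    rewrite -mulnA; apply: (@leq_ltn_trans (2 * n + 2 * d - 2)); first lia.
    rewrite mulSn mulSn; lia.
  rewrite ltn_mul2r; lia.
have Hms : m <= (hi - lo).+1.
  have : m * d < (hi - lo).+2 * d by rewrite mulSn; lia.
  rewrite ltn_mul2r ltnS; by case/andP.
apply: (@arith2b r m (r * k) Q lo hi c) => //; by rewrite addn0 in H3.
Qed.


Theorem mainTheorem9 (n d r : nat) :
  2 <= n -> 1 <= d -> 3 <= r -> d <= n -> (d * r) %% n = 0 ->
  (d * r = n ->
     diam (Qadj n d r) = (if r == 3 then n + r else n + (3 * r) %/ 2 - 2)) /\
  (2 * n <= d * r ->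
     diam (Qadj n d r) = n + maxn (r %/ 2) (2 * ceil_div n d - 2)).
Proof.
move=> Hn2 Hd1 Hr3 Hdn Hdr0.
have Hr : 0 < r by lia.
have Hn : 0 < n by lia.
have Hd : 0 < d by lia.
have Hh : r %/ 2 < r by lia.
have HB := @bound n r Hn2 (ltnW Hr3).
have HT := card_QV n r.
split.
- move=> Hdr.
  have E3 : (3 * r) %/ 2 = r + r %/ 2 by lia.
  apply/eqP; rewrite eqn_leq; apply/andP; split.
  + apply: diam_ub; first by rewrite HT; case: ifP => _; lia.
    move=> [a x] [b y]; apply: reach_le (ub_case1 Hr a b x y Hd Hn Hdr Hr3).
    case: ifP => _; lia.
  + case: ifP => /eqP Hr3'.
    * apply: (@diam_lb n d r _ ([ffun=> false], Ordinal Hr) ([ffun=> true], Ordinal Hr)).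
        rewrite HT; lia.
      by move=> k Hk; apply: lb1'.
    * apply: (@diam_lb n d r _ ([ffun=> false], Ordinal Hr) ([ffun=> true], Ordinal Hh)).
        rewrite HT; lia.
      move=> k Hk; apply: lb1 => //; lia.
- move=> H2n.
  have [Hm1 Hm2] := ceil_facts Hd Hn.
  have Hmr : 2 * ceil_div n d <= r + 1.
    have : (2 * ceil_div n d) * d < r.+2 * d.
      rewrite -mulnA; apply: (@leq_ltn_trans (2 * n + 2 * d - 2)); first lia.
      rewrite mulSn mulSn; lia.
    rewrite ltn_mul2r; lia.
  apply/eqP; rewrite eqn_leq; apply/andP; split.
  + apply: diam_ub; first by rewrite HT; lia.
    move=> [a x] [b y]; exact: ub_case2.
  + rewrite addn_maxr geq_max; apply/andP; split.
    * apply: (@diam_lb n d r _ ([ffun=> false], Ordinal Hr) ([ffun=> true], Ordinal Hh)).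
        rewrite HT; lia.
      by move=> k Hk; apply: lb2a.
    * apply: (@diam_lb n d r _ ([ffun=> false], Ordinal Hr) ([ffun=> true], Ordinal Hr)).
        rewrite HT; lia.
      by move=> k Hk; apply: lb2b.
Qed.
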